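(* Let $\kappa$ be a field, $r\ge1$, $\mathbf{s}=(s_1,\dots,s_d)$ nonnegative integers with sum $r$, $w\in S_{r,\mathbf{s}}$ and $u\in U_w$. Let $H_{\mathbf{s}}:=P_{\mathbf{s}}\times T$ act on $\mathrm{GL}_r(\kappa)$ by $(p,t)\cdot g=pgt^{-1}$. Then the stabilizer of $wu$ in $H_{\mathbf{s}}$ is isomorphic to $$C_T(u)=\{t\in T: tut^{-1}=u\}=\bigcap_{\{\alpha\in R^+\,:\,w\cdot\alpha\in R^-\smallsetminus R_{\mathbf{s}},\ u_\alpha\neq1\}}\mathrm{Ker}\,\alpha.$$
   Context: $T\cong(\kappa^\times)^r$ is the diagonal torus of $\mathrm{GL}_r$. Partition $\{1,\dots,r\}$ into consecutive blocks of sizes $s_d,\dots,s_1$ from $1$ upward; $P_{\mathbf{s}}$ is the block lower triangular subgroup, $L_{\mathbf{s}}$ its block diagonal Levi factor. Permutations $w$ are identified with matrices $a(w)_{ij}=\delta_{i,w(j)}$; $S_{r,\mathbf{s}}$ is the set of $w$ with $w^{-1}(a)<w^{-1}(b)$ whenever $a<b$ are in the same block. Roots: $\alpha_{i,j}(t_1,\dots,t_r)=t_i/t_j$ for $i\ne j$; $R$ is the set of these, $R^+=\{\alpha_{i,j}:j<i\}$, $R^-=R\smallsetminus R^+$, $w\cdot\alpha_{i,j}=\alpha_{w(i),w(j)}$; $U_{\alpha_{i,j}}=\{I+xE_{i,j}:x\in\kappa\}$; $R_{\mathbf{s}}$ is the set of roots $\alpha$ with $U_\alpha\subset L_{\mathbf{s}}$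 (i.e. $\alpha_{i,j}$ with $i,j$ in the same block). $U_w$ is the group of lower unitriangular matrices whose off-diagonal entry $(i,j)$ vanishes unless $j<i$ and $w(i)<w(j)$. For $u\in U_w$ and $\alpha=\alpha_{i,j}$ with $U_\alpha\subset U_w$, $u_\alpha:=I+u_{ij}E_{i,j}$ is the component of $u$ in $U_\alpha$; so $u_\alpha\ne1$ means $u_{ij}\neq0$. *)

(* Defs.v *)
From HB Require Import structures.
From mathcomp Require Import all_boot all_order all_algebra all_fingroup.
Set Implicit Arguments. Unset Strict Implicit. Unset Printing Implicit Defensive.
Import Order.TTheory GRing.Theory Num.Theory.
Local Open Scope ring_scope.

(* Indices are 0-based: 'I_r = {0,..,r-1} stands for {1,..,r}. *)

(* s = [:: s_1; ...; s_d].  {0..r-1} is cut into consecutive blocks of sizes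
   s_d, ..., s_1 from the bottom (i.e. of sizes (rev s)).  blk s i is the label of
   the block containing i: the number of block-ends (prefix sums of rev s)
   that are <= i. *)
Definition blk (s : seq nat) (i : nat) : nat :=
  count (fun k => (sumn (take k.+1 (rev s)) <= i)%N) (iota 0 (size s)).

Section Defs.
Variables (K : fieldType) (r : nat).

Definition in_T (t : 'M[K]_r) : Prop :=
  (forall i j : 'I_r, i != j -> t i j = 0) /\ (forall i : 'I_r, t i i != 0).

Definition in_P (s : seq nat) (p : 'M[K]_r) : Prop :=
  p \in unitmx /\ (forall i j : 'I_r, (blk s i < blk s j)%N -> p i j = 0).

Definition in_S (s : seq nat) (w : 'S_r) : Prop :=
  forall a b : 'I_r, (a < b)%N -> blk s a = blk s b -> ((w^-1)%g a < (w^-1)%g b)%N.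

Definition in_U (w : 'S_r) (u : 'M[K]_r) : Prop :=
  (forall i : 'I_r, u i i = 1) /\
  (forall i j : 'I_r, ~~ ((j < i)%N && (w i < w j)%N) -> i != j -> u i j = 0).

Definition amat (w : 'S_r) : 'M[K]_r := \matrix_(i, j) ((i == w j)%:R).

Definition alpha (i j : 'I_r) (t : 'M[K]_r) : K := t i i / t j j.

Definition in_stab (s : seq nat) (g : 'M[K]_r) (x : 'M[K]_r * 'M[K]_r) : Prop :=
  in_P s x.1 /\ in_T x.2 /\ x.1 *m g *m invmx x.2 = g.

Definition in_CT (u : 'M[K]_r) (t : 'M[K]_r) : Prop :=
  in_T t /\ t *m u *m invmx t = u.

Definition grp_iso (A : 'M[K]_r * 'M[K]_r -> Prop) (B : 'M[K]_r -> Prop) : Prop :=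
  exists f : 'M[K]_r * 'M[K]_r -> 'M[K]_r,
    [/\ (forall x, A x -> B (f x)),
        (forall x y, A x -> A y -> f x = f y -> x = y),
        (forall t, B t -> exists2 x, A x & f x = t) &
        (forall x y, A x -> A y -> f (x.1 *m y.1, x.2 *m y.2) = f x *m f y)].
End Defs.

(* Main.v *)
Require Import Defs.
From HB Require Import structures.
From mathcomp Require Import all_boot all_order all_algebra all_fingroup.
From mathcomp Require Import zify.
Import Order.TTheory GRing.Theory Num.Theory.
Local Open Scope ring_scope.
Set Implicit Arguments. Unset Strict Implicit.

Lemma blk_mono s i j : (i <= j)%N -> (blk s i <= blk s j)%N.
Proof. move=> hij; apply: sub_count => k /= hk; exact: leq_trans hk hij. Qed.

Section H.
Variables (K : fieldType) (r : nat).

Lemma amat_mulE (w : 'S_r) (A : 'M[K]_r) i j :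
  (amat K w *m A) i j = A ((w^-1)%g i) j.
Proof.
rewrite mxE (bigD1 ((w^-1)%g i)) //= mxE permKV eqxx mul1r big1 ?addr0 // => k hk.
rewrite mxE; case: eqP => [e|]; last by rewrite mul0r.
by move: hk; rewrite e permK eqxx.
Qed.

Lemma mul_amatE (w : 'S_r) (A : 'M[K]_r) i j :
  (A *m amat K w) i j = A i (w j).
Proof.
rewrite mxE (bigD1 (w j)) //= mxE eqxx mulr1 big1 ?addr0 // => k hk.
by rewrite mxE (negbTE hk) mulr0.
Qed.

Lemma amat_unit (w : 'S_r) : amat K w \in unitmx.
Proof.
suff -> : amat K w = perm_mx (w^-1)%g by apply: unitmx_perm.
apply/matrixP => i j; rewrite !mxE; congr (_%:R).
by rewrite -(inj_eq (@perm_inj _ (w^-1)%g)) permK.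
Qed.

Lemma trig_unit (A : 'M[K]_r) : (forall i j : 'I_r, (i < j)%N -> A i j = 0) ->
  (forall i, A i i != 0) -> A \in unitmx.
Proof.
move=> h1 h2; rewrite unitmxE det_trig; last by apply/is_trig_mxP.
by rewrite unitfE; apply/prodf_neq0 => i _.
Qed.

Lemma T_unit (t : 'M[K]_r) : in_T t -> t \in unitmx.
Proof. by case=> h1 h2; apply: trig_unit => // i j /ltn_eqF h; apply: h1; rewrite -val_eqE /= h. Qed.

Lemma mulTE (t A : 'M[K]_r) i j : in_T t -> (t *m A) i j = t i i * A i j.
Proof.
case=> h1 _; rewrite mxE (bigD1 i) //= big1 ?addr0 // => k hk.
by rewrite h1 ?mul0r // eq_sym.
Qed.

Lemma mul_TE (t A : 'M[K]_r) i j : in_T t -> (A *m t) i j = A i j * t j j.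
Proof.
case=> h1 _; rewrite mxE (bigD1 j) //= big1 ?addr0 // => k hk.
by rewrite h1 ?mulr0.
Qed.
Lemma blk_neq s (w : 'S_r) (i j : 'I_r) : in_S s w -> (j < i)%N -> (w i < w j)%N ->
  blk s (w i) != blk s (w j).
Proof.
move=> hS hji hw; apply/eqP => e; have := hS _ _ hw e.
by rewrite !permK ltnNge (ltnW hji).
Qed.

Lemma key (w : 'S_r) (u t : 'M[K]_r) (P : 'I_r -> 'I_r -> K) :
  in_U w u ->
  (forall i j : 'I_r, (j < i)%N -> (w i < w j)%N -> P i j = 0) ->
  (forall i j, \sum_k P i k * u k j = u i j * t j j) ->
  forall i j, P i j = (i == j)%:R * t j j.
Proof.
case=> hU1 hU2 hN hE.
suff main : forall m (j : 'I_r), (r - j <= m)%N -> forall i, P i j = (i == j)%:R * t j j.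
  by move=> i j; apply: (main r _ (leq_subr _ _)).
elim=> [|m IH] j hj i.
  by move: hj; rewrite leqn0 subn_eq0 leqNgt ltn_ord.
have hs : \sum_k P i k * u k j = P i j + (if i != j then P i i * u i j else 0).
  rewrite (bigD1 j) //= hU1 mulr1; congr (_ + _).
  transitivity (\sum_(k | k != j) (if k == i then P i i * u i j else 0)).
    apply: eq_bigr => k hk.
    case: (ltngtP k j) => hkj; last by move: hk; rewrite -val_eqE /= hkj eqxx.
    - have hz : u k j = 0.
        by apply: hU2; rewrite ?negb_and -?leqNgt ?(ltnW hkj) // -val_eqE /= ltn_eqF.
      rewrite hz mulr0; case: eqP => // e; by rewrite -e hz mulr0.
    - rewrite IH; last by have := ltn_ord k; lia.
      case: (eqVneq i k) hkj => [<-|_] hkj; last by rewrite /= mulr0n !mul0r.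
      rewrite (IH i) ?eqxx /= ?mulr1n ?mul1r //; have := ltn_ord i; lia.
  case: (eqVneq i j) => [->|hij].
    by rewrite big1 // => k hk; rewrite (negbTE hk).
  by rewrite (bigD1 i) //= eqxx big1 ?addr0 // => k /andP[_ /negbTE ->].
case: (eqVneq i j) hs => [->|hij] hs.
  have := hE j j; rewrite hs /= addr0 hU1 mul1r => ->.
  done.
rewrite mulr0n mul0r.
case: (boolP ((j < i)%N && (w i < w j)%N)) => [/andP[h1 h2]|hn].
  exact: hN.
by have := hE i j; rewrite hs hU2 // mulr0 mul0r /= addr0.
Qed.

Lemma ct (u t : 'M[K]_r) : in_T t -> (in_CT u t <-> t *m u = u *m t).
Proof.
move=> hT; split.
  by case=> _ e; rewrite -{2}e mulmxKV // T_unit.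
by move=> e; split=> //; rewrite e mulmxK // T_unit.
Qed.

Lemma comm_entry (u t : 'M[K]_r) : in_T t ->
  (t *m u = u *m t <-> forall i j, t i i * u i j = u i j * t j j).
Proof.
move=> hT; split.
  by move=> e i j; rewrite -mulTE // e mul_TE.
by move=> h; apply/matrixP => i j; rewrite mulTE // mul_TE.
Qed.
End H.

Theorem lemma3p4 (K : fieldType) (r : nat) (s : seq nat) (w : 'S_r)
    (u : 'M[K]_r) :
  (0 < r)%N -> sumn s = r -> in_S s w -> in_U w u ->
  grp_iso (in_stab s (amat K w *m u)) (in_CT u) /\
  (forall t : 'M[K]_r,
     in_CT u t <->
     (in_T t /\
      forall i j : 'I_r,
        (j < i)%N -> (w i < w j)%N -> blk s (w i) != blk s (w j) -> u i j != 0 ->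
        alpha i j t = 1)).
Proof.
move=> hr hsum hS hU.
have ua := @amat_unit K r w.
have uu : u \in unitmx.
  apply: trig_unit; last by move=> i; rewrite hU.1 oner_neq0.
  move=> i j hij; apply: hU.2; first by rewrite negb_and -leqNgt ltnW.
  by rewrite -val_eqE /= ltn_eqF.
have ug : amat K w *m u \in unitmx by rewrite unitmx_mul ua uu.
split; last first.
  move=> t; split.
    move=> hct; have hT := hct.1; split=> // i j hji hw _ nz.
    have := (comm_entry u hT).1 ((ct u hT).1 hct) i j.
    rewrite mulrC => e0; have e : t i i = t j j := mulfI nz e0.
    by rewrite /alpha e divff //; case: hT.
  case=> hT hA; apply/(ct u hT)/(comm_entry u hT) => i j.
  case: (eqVneq (u i j) 0) => [->|nz]; first by rewrite mulr0 mul0r.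
  case: (eqVneq i j) => [->|hij]; first by rewrite mulrC.
  case: (boolP ((j < i)%N && (w i < w j)%N)) => [/andP[h1 h2]|hn]; last first.
    by rewrite hU.2 ?eqxx in nz.
  have := hA i j h1 h2 (blk_neq hS h1 h2) nz; rewrite /alpha => e.
  have tj : t j j != 0 by case: hT.
  by rewrite -[t i i](divfK tj) e mul1r mulrC.
have pg : forall p t, in_T t -> p *m (amat K w *m u) *m invmx t = amat K w *m u ->
    p *m (amat K w *m u) = (amat K w *m u) *m t.
  by move=> p t hT he; rewrite -{2}he mulmxKV // T_unit.
exists (fun x => x.2); split.
- move=> [p t] [hP [hT he]] /=.
  have pg1 := pg _ _ hT he.
  have hN : forall i j : 'I_r, (j < i)%N -> (w i < w j)%N -> p (w i) (w j) = 0.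
    move=> i j h1 h2; apply: hP.2; rewrite ltn_neqAle blk_neq //.
    exact: blk_mono (ltnW h2).
  have hE : forall i j, \sum_k p (w i) (w k) * u k j = u i j * t j j.
    move=> i j; have := congr1 (fun M : 'M[K]_r => M (w i) j) pg1 => /=.
    rewrite (mul_TE (t:=t)) // [in RHS]amat_mulE (permK w i) mxE => <-.
    symmetry; rewrite (reindex_inj (@perm_inj _ w)); apply: eq_bigr => k _.
    by rewrite amat_mulE permK.
  have hk := key hU hN hE.
  apply/(ct u hT)/(comm_entry u hT) => i j.
  rewrite -hE (bigD1 i) //= hk eqxx mul1r big1 ?addr0 // => k hki.
  by rewrite hk eq_sym (negbTE hki) !mul0r.
- move=> [p1 t1] [p2 t2] [_ [hT1 e1]] [_ [_ e2]] /= et; subst t2.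
  have h1 := pg _ _ hT1 e1; have h2 := pg _ _ hT1 e2.
  by rewrite -(mulmxK ug p1) h1 -h2 mulmxK.
- move=> t hct; have hT := hct.1.
  exists (amat K w *m t *m invmx (amat K w), t) => //.
  split; [split|split=> //].
  + by rewrite !unitmx_mul unitmx_inv ua T_unit.
  + move=> k l hkl /=.
    have hkl' : k != l by apply/eqP => e; rewrite e ltnn in hkl.
    have E : amat K w *m t *m invmx (amat K w) *m amat K w = amat K w *m t.
      by rewrite mulmxKV.
    have := congr1 (fun M : 'M[K]_r => M k ((w^-1)%g l)) E => /=.
    rewrite mul_amatE permKV amat_mulE => ->.
    by apply: hT.1; rewrite (inj_eq (@perm_inj _ _)).
  + rewrite /= mulmxA mulmxKV //.
    by rewrite -[amat K w *m t *m u]mulmxA -mulmxA hct.2.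
- by [].
Qed.
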